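(* Let $K$ be any infinite field of characteristic $0$ (e.g. $\mathbb{R}$, $\mathbb{Q}$, the real algebraic numbers). Then the statements of Theorems 4.1 and 5.1 remain true with $\mathbb{C}$ replaced by $K$ throughout: for $\varphi(x)$, $x\in K^n$, in disjunctive normal form $\bigvee_{i=1}^{d}(\bigwedge_{j} t_{ij}=0\wedge\bigwedge_{k} u_{ik}\neq0)$ with $t_{ij},u_{ik}\in K[x]$ there is $p\in K[a,b,x]$ with $\varphi(x)\iff(\exists a\in K)(\forall b\in K)\,p(a,b,x)=0$ for all $x\in K^n$; and for $\varphi(x)$ in conjunctive normal form $\bigwedge_{i=1}^{d}(\bigvee_{j} t_{ij}=0\vee\bigvee_{k} u_{ik}\neq0)$ there is $q\in K[a,b,x]$ with $\varphi(x)\iff(\forall a\in K)(\exists b\in K)\,q(a,b,x)=0$ for all $x\in K^n$ (with the same explicit polynomials and degree bounds as over $\mathbb{C}$).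
   Context: Explicit polynomials: $p=\prod_{i}\big[(1-a\prod_k u_{ik})+\sum_j t_{ij}b^j\big]$ and $q=\big[1-b\prod_{i=1}^d(a-i)\big]\big[\sum_{i=1}^d\prod_{h\neq i}(a-h)\prod_j t_{ij}\prod_k(1-b\,u_{ik})\big]$; degree bounds: $p$ has degree at most $d$ in $a$ and at most the total number of equations in $b$; $q$ has degree at most $2d-1$ in $a$ and at most $f+1$ in $b$, $f$ the maximal number of inequations in a conjunct. *)

(* Defs.v *)
From mathcomp Require Import all_boot all_algebra.
From mathcomp Require Import mpoly.
Set Implicit Arguments. Unset Strict Implicit. Unset Printing Implicit Defensive.
Import GRing.Theory.
Local Open Scope ring_scope.

(* Polynomials in K[a,b,x] with x = (x_0,...,x_{n-1}) are elements of
   {mpoly K[n.+2]}: variable 0 is a, variable 1 is b, variable i+2 is x_i. *)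
Section Defs.
Variables (K : fieldType) (n : nat).

Definition varA : 'I_n.+2 := ord0.
Definition varB : 'I_n.+2 := lift ord0 ord0.
Definition varX (i : 'I_n) : 'I_n.+2 := lift ord0 (lift ord0 i).

Definition liftx (t : {mpoly K[n]}) : {mpoly K[n.+2]} :=
  t \mPo [tuple 'X_(varX i) | i < n].

Definition env (a b : K) (x : 'I_n -> K) (k : 'I_n.+2) : K :=
  if unlift ord0 k is Some k1 then
    if unlift ord0 k1 is Some i then x i else b
  else a.

Definition mdegv (m : nat) (p : {mpoly K[m]}) (k : 'I_m) : nat :=
  \max_(mn <- msupp p) mn k.

Variable d : nat.
Variables (T U : 'I_d -> seq {mpoly K[n]}).

Definition holdsDNF (x : 'I_n -> K) : Prop :=
  exists i : 'I_d, (forall t, t \in T i -> t.@[x] = 0) /\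
                   (forall u, u \in U i -> u.@[x] != 0).

Definition holdsCNF (x : 'I_n -> K) : Prop :=
  forall i : 'I_d, (exists2 t, t \in T i & t.@[x] = 0) \/
                   (exists2 u, u \in U i & u.@[x] != 0).

Local Notation XA := ('X_varA : {mpoly K[n.+2]}).
Local Notation XB := ('X_varB : {mpoly K[n.+2]}).

Definition pDNF : {mpoly K[n.+2]} :=
  \prod_(i < d) ((1 - XA * \prod_(u <- U i) liftx u)
                 + \sum_(j < size (T i)) liftx (nth 0 (T i) j) * XB ^+ j.+1).

Definition qCNF : {mpoly K[n.+2]} :=
  (1 - XB * \prod_(i < d) (XA - (i.+1)%:R%:MP)) *
  \sum_(i < d) ((\prod_(h < d | h != i) (XA - (h.+1)%:R%:MP))
                * \prod_(t <- T i) liftx t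
                * \prod_(u <- U i) (1 - XB * liftx u)).

Definition num_eqs : nat := \sum_(i < d) size (T i).
Definition max_ineqs : nat := \max_(i < d) size (U i).

End Defs.

(* Main.v *)
Require Import Defs.
From mathcomp Require Import all_boot all_algebra.
From mathcomp Require Import mpoly.
From mathcomp Require Import zify.
Set Implicit Arguments. Unset Strict Implicit. Unset Printing Implicit Defensive.
Import GRing.Theory.
Local Open Scope ring_scope.

Section Deg.
Variables (K : fieldType) (m : nat) (k : 'I_m).
Definition Dg (p : {mpoly K[m]}) (N : nat) := forall mn, mn \in msupp p -> (mn k <= N)%N.

Lemma Dg_mdegv p N : Dg p N -> (mdegv p k <= N)%N.
Proof. move=> h; apply/bigmax_leqP_seq => i hi _; exact: h. Qed.

Lemma Dg_weak p N N' : (N <= N')%N -> Dg p N -> Dg p N'.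
Proof. by move=> le h mn /h; move/leq_trans; apply. Qed.

Lemma Dg_C c N : Dg c%:MP N.
Proof. move=> mn; rewrite msuppC; case: (c == 0) => //; rewrite inE => /eqP ->. by rewrite mnm0E. Qed.

Lemma Dg_0 N : Dg 0 N.
Proof. by move=> mn; rewrite msupp0. Qed.

Lemma Dg_1 N : Dg 1 N.
Proof. by move=> mn; rewrite msupp1 inE => /eqP ->; rewrite mnm0E. Qed.

Lemma Dg_X i : Dg 'X_i (i == k).
Proof. by move=> mn; rewrite msuppX inE => /eqP ->; rewrite mnm1E. Qed.

Lemma Dg_D p q N : Dg p N -> Dg q N -> Dg (p + q) N.
Proof. move=> hp hq mn /msuppD_le; rewrite mem_cat => /orP[/hp|/hq] //. Qed.

Lemma Dg_N p N : Dg p N -> Dg (- p) N.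
Proof. by move=> hp mn; rewrite (perm_mem (msuppN p)); apply: hp. Qed.

Lemma Dg_B p q N : Dg p N -> Dg q N -> Dg (p - q) N.
Proof. by move=> hp hq; apply: Dg_D => //; apply: Dg_N. Qed.

Lemma Dg_M p q N1 N2 : Dg p N1 -> Dg q N2 -> Dg (p * q) (N1 + N2).
Proof.
move=> hp hq mn /msuppM_le /allpairsP [[m1 m2] /= [h1 h2 ->]].
by rewrite mnmDE leq_add // ?hp ?hq.
Qed.

Lemma Dg_sum (I : Type) (r : seq I) (P : pred I) F N :
  (forall i, P i -> Dg (F i) N) -> Dg (\sum_(i <- r | P i) F i) N.
Proof. move=> h; apply: (big_ind (fun p => Dg p N)) => //; [exact: Dg_0 | by move=> x y hx hy; apply: Dg_D]. Qed.

Lemma Dg_prod (I : Type) (r : seq I) (P : pred I) F Nf :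
  (forall i, P i -> Dg (F i) (Nf i)) ->
  Dg (\prod_(i <- r | P i) F i) (\sum_(i <- r | P i) Nf i).
Proof.
move=> h; apply: (big_rec2 (fun p N => Dg p N)); first exact: Dg_1.
by move=> i y1 y2 Pi hy; apply: Dg_M => //; apply: h.
Qed.

Lemma Dg_exp p N e : Dg p N -> Dg (p ^+ e) (N * e).
Proof.
move=> h; elim: e => [|e IH]; first by rewrite expr0; apply: Dg_1.
by rewrite exprS mulnS; apply: Dg_M.
Qed.

Lemma Dg_Z c p N : Dg p N -> Dg (c *: p) N.
Proof. by move=> h; rewrite -mul_mpolyC -[N]add0n; apply: Dg_M => //; apply: Dg_C. Qed.
End Deg.
Lemma Dg_prod0 (K : fieldType) (m : nat) (k : 'I_m) (I : Type) (r : seq I) (P : pred I) F :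
  (forall i, P i -> Dg k (F i) 0) -> Dg k (\prod_(i <- r | P i) F i : {mpoly K[m]}) 0.
Proof.
move=> h; apply: (Dg_weak (N := \sum_(i <- r | P i) 0%N)); first by rewrite big1.
exact: Dg_prod.
Qed.

Section L.
Variables (K : fieldType) (n : nat).

Lemma varXA (i : 'I_n) : (varX i == varA n) = false.
Proof. by apply/negbTE; rewrite /varX /varA; rewrite eq_sym; apply: neq_lift. Qed.
Lemma varXB (i : 'I_n) : (varX i == varB n) = false.
Proof. by rewrite /varX /varB (inj_eq (@lift_inj _ _)); apply/negbTE; rewrite eq_sym; apply: neq_lift. Qed.
Lemma varBA : (varB n == varA n) = false.
Proof. by apply/negbTE; rewrite /varB /varA; rewrite eq_sym; apply: neq_lift. Qed.

Lemma Dg_liftx (k : 'I_n.+2) (t : {mpoly K[n]}) :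
  (forall i, (varX i == k) = false) -> Dg k (liftx t) 0.
Proof.
move=> hk; rewrite /liftx comp_mpolyE; apply: Dg_sum => m _; apply: Dg_Z.
have -> : 0%N = \sum_(i < n) 0%N by rewrite big1.
apply: Dg_prod => i _; rewrite tnth_mktuple -(muln0 (m i)) mulnC.
by apply: Dg_exp; have := @Dg_X K _ k (varX i); rewrite hk.
Qed.

Lemma env_A (a b : K) (x : 'I_n -> K) : env a b x (varA n) = a.
Proof. by rewrite /env /varA unlift_none. Qed.
Lemma env_B (a b : K) (x : 'I_n -> K) : env a b x (varB n) = b.
Proof. by rewrite /env /varB liftK unlift_none. Qed.
Lemma env_X (a b : K) (x : 'I_n -> K) i : env a b x (varX i) = x i.
Proof. by rewrite /env /varX !liftK. Qed.

Lemma liftxE (a b : K) (x : 'I_n -> K) (t : {mpoly K[n]}) : (liftx t).@[env a b x] = t.@[x].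
Proof.
rewrite /liftx comp_mpoly_meval; apply: meval_eq => i.
by rewrite tnth_mktuple mevalXU env_X.
Qed.
End L.

Section M.
Variables (K : fieldType) (n d : nat) (T U : 'I_d -> seq {mpoly K[n]}).

Lemma sum1_ord_neq (i : 'I_d) : (\sum_(h < d | h != i) 1 = d.-1)%N.
Proof.
by rewrite sum1dep_card cardsE cardC1 card_ord.
Qed.

Lemma degpA : (mdegv (pDNF T U) (varA n) <= d)%N.
Proof.
apply: Dg_mdegv; rewrite /pDNF.
apply: (@Dg_weak _ _ _ _ (\sum_(i < d) 1)%N); first by rewrite sum1_card card_ord.
apply: Dg_prod => i _; apply: Dg_D.
  apply: Dg_B; first exact: Dg_1.
  rewrite -[1%N]addn0; apply: Dg_M; first by have := @Dg_X K _ (varA n) (varA n); rewrite eqxx.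
  apply: Dg_prod0 => u _.
  by apply: Dg_liftx => j; rewrite varXA.
apply: Dg_sum => j _; rewrite -[1%N]add0n; apply: Dg_M.
  by apply: Dg_liftx => j'; rewrite varXA.
apply: (Dg_weak (N := 0 * j.+1)) => //; apply: Dg_exp.
by have := @Dg_X K _ (varA n) (varB n); rewrite varBA.
Qed.

Lemma degpB : (mdegv (pDNF T U) (varB n) <= num_eqs T)%N.
Proof.
apply: Dg_mdegv; rewrite /pDNF /num_eqs.
apply: Dg_prod => i _; apply: Dg_D.
  apply: (Dg_weak (N := 0)) => //.
  apply: Dg_B; first exact: Dg_1.
  rewrite -[0%N]addn0; apply: Dg_M; first by have := @Dg_X K _ (varB n) (varA n); rewrite eq_sym varBA.
  apply: Dg_prod0 => u _.
  by apply: Dg_liftx => j; rewrite varXB.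
apply: Dg_sum => j _.
apply: (Dg_weak (N := 0 + 1 * j.+1)); first by rewrite mul1n add0n ltn_ord.
apply: Dg_M; first by apply: Dg_liftx => j'; rewrite varXB.
by apply: Dg_exp; have := @Dg_X K _ (varB n) (varB n); rewrite eqxx.
Qed.

Lemma degqA : (mdegv (qCNF T U) (varA n) <= (2 * d).-1)%N.
Proof.
apply: Dg_mdegv; rewrite /qCNF.
apply: (Dg_weak (N := d + d.-1)); first lia.
apply: Dg_M.
  apply: (Dg_weak (N := 0 + \sum_(i < d) 1)); first by rewrite add0n sum1_card card_ord.
  apply: Dg_B; first exact: Dg_1.
  apply: Dg_M; first by have := @Dg_X K _ (varA n) (varB n); rewrite varBA.
  apply: Dg_prod => i _; apply: Dg_B; last exact: Dg_C.
  by have := @Dg_X K _ (varA n) (varA n); rewrite eqxx.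
apply: Dg_sum => i _.
apply: (Dg_weak (N := \sum_(h < d | h != i) 1 + 0 + 0)); first by rewrite sum1_ord_neq !addn0.
apply: Dg_M; first apply: Dg_M.
- apply: Dg_prod => h _; apply: Dg_B; last exact: Dg_C.
  by have := @Dg_X K _ (varA n) (varA n); rewrite eqxx.
- by apply: Dg_prod0 => t _; apply: Dg_liftx => j; rewrite varXA.
- apply: Dg_prod0 => u _; apply: Dg_B; first exact: Dg_1.
  apply: (Dg_weak (N := 0 + 0)) => //; apply: Dg_M.
    by have := @Dg_X K _ (varA n) (varB n); rewrite varBA.
  by apply: Dg_liftx => j; rewrite varXA.
Qed.

Lemma degqB : (mdegv (qCNF T U) (varB n) <= (max_ineqs U).+1)%N.
Proof.
apply: Dg_mdegv; rewrite /qCNF.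
apply: (Dg_weak (N := 1 + max_ineqs U)); first by rewrite add1n.
apply: Dg_M.
  apply: Dg_B; first exact: Dg_1.
  apply: (Dg_weak (N := 1 + 0)) => //; apply: Dg_M.
    by have := @Dg_X K _ (varB n) (varB n); rewrite eqxx.
  apply: Dg_prod0 => i _; apply: Dg_B; last exact: Dg_C.
  by have := @Dg_X K _ (varB n) (varA n); rewrite eq_sym varBA.
apply: Dg_sum => i _.
apply: (Dg_weak (N := 0 + 0 + \sum_(u <- U i) 1)).
  by rewrite !add0n sum1_size; apply: (leq_bigmax (F := fun i => size (U i))).
apply: Dg_M; first apply: Dg_M.
- apply: Dg_prod0 => h _; apply: Dg_B; last exact: Dg_C.
  by have := @Dg_X K _ (varB n) (varA n); rewrite eq_sym varBA.
- by apply: Dg_prod0 => t _; apply: Dg_liftx => j; rewrite varXB.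
- apply: Dg_prod => u _; apply: Dg_B; first exact: Dg_1.
  apply: (Dg_weak (N := 1 + 0)) => //; apply: Dg_M.
    by have := @Dg_X K _ (varB n) (varB n); rewrite eqxx.
  by apply: Dg_liftx => j; rewrite varXB.
Qed.
End M.

Section E.
Variables (K : fieldType) (n d : nat) (T U : 'I_d -> seq {mpoly K[n]}).

Lemma evalp (a b : K) (x : 'I_n -> K) :
  (pDNF T U).@[env a b x] =
  \prod_(i < d) ((1 - a * \prod_(u <- U i) u.@[x])
                 + \sum_(j < size (T i)) (nth 0 (T i) j).@[x] * b ^+ j.+1).
Proof.
rewrite /pDNF rmorph_prod; apply: eq_bigr => i _.
rewrite rmorphD rmorphB rmorph1 rmorphM rmorph_prod /= mevalXU env_A rmorph_sum /=.
congr (_ - _ * _ + _); first by apply: eq_bigr => u _; rewrite liftxE.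
apply: eq_bigr => j _; rewrite rmorphM rmorphXn /= mevalXU env_B liftxE //.
Qed.

Lemma evalq (a b : K) (x : 'I_n -> K) :
  (qCNF T U).@[env a b x] =
  (1 - b * \prod_(i < d) (a - (i.+1)%:R)) *
  \sum_(i < d) ((\prod_(h < d | h != i) (a - (h.+1)%:R))
                * \prod_(t <- T i) t.@[x]
                * \prod_(u <- U i) (1 - b * u.@[x])).
Proof.
rewrite /qCNF rmorphM rmorphB rmorph1 rmorphM rmorph_prod /= mevalXU env_B rmorph_sum /=.
congr ((_ - _ * _) * _).
  by apply: eq_bigr => i _; rewrite rmorphB /= mevalXU env_A mevalC.
apply: eq_bigr => i _; rewrite !rmorphM !rmorph_prod /=.
congr (_ * _ * _).
- by apply: eq_bigr => h _; rewrite rmorphB /= mevalXU env_A mevalC.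
- by apply: eq_bigr => t _; rewrite liftxE.
- by apply: eq_bigr => u _; rewrite rmorphB rmorph1 rmorphM /= mevalXU env_B liftxE.
Qed.
End E.

Section Logic.
Variables (K : fieldType) (Hchar : [pchar K] =i pred0)
  (Hinf : forall s : seq K, exists x : K, x \notin s).
Variables (n d : nat) (T U : 'I_d -> seq {mpoly K[n]}).

Lemma distinct_seq (N : nat) : exists s : seq K, uniq s /\ size s = N.
Proof.
elim: N => [|N [s [us ss]]]; first by exists [::].
have [y hy] := Hinf s; exists (y :: s); by rewrite /= hy us ss.
Qed.

Lemma poly_zero (P : {poly K}) : (forall b, P.[b] = 0) -> P = 0.
Proof.
move=> h; apply/eqP; apply/negPn/negP => nz.
have [s [us ss]] := distinct_seq (size P).
have : all (root P) s by apply/allP => y _; apply/rootP.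
by move/(max_poly_roots nz)/(_ us); rewrite ss ltnn.
Qed.

Lemma natr_inj (m k : nat) : (m%:R : K) = k%:R -> m = k.
Proof.
have h := (pcharf0P K).1 Hchar.
wlog le : m k / (m <= k)%N.
  move=> W; case: (leqP m k) => [le|/ltnW le] e; first exact: W.
  by symmetry; apply: W.
move=> e; have : ((k - m)%:R : K) = 0 by rewrite natrB // e subrr.
move/eqP; rewrite h subn_eq0 => le'; apply/eqP; by rewrite eqn_leq le le'.
Qed.

Lemma dnf x : holdsDNF T U x <-> exists a, forall b, (pDNF T U).@[env a b x] = 0.
Proof.
split.
- case=> i [ht hu].
  have hP : \prod_(u <- U i) u.@[x] != 0.
    by rewrite prodf_seq_neq0; apply/allP => u uU; rewrite implyTb; exact: hu.
  exists (\prod_(u <- U i) u.@[x])^-1 => b.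
  rewrite evalp (bigD1 i) //= mulVf // subrr add0r big1 ?mul0r // => j _.
  by rewrite (ht _ (mem_nth 0 (ltn_ord j))) mul0r.
- case=> a hb.
  pose F (i : 'I_d) : {poly K} := (1 - a * \prod_(u <- U i) u.@[x])%:P
      + 'X * Poly [seq t.@[x] | t <- T i].
  have hF b i : (F i).[b] = (1 - a * \prod_(u <- U i) u.@[x])
      + \sum_(j < size (T i)) (nth 0 (T i) j).@[x] * b ^+ j.+1.
    rewrite hornerD hornerC hornerM hornerX (horner_coef_wide _ (size_Poly _)) size_map mulr_sumr.
    congr (_ + _); apply: eq_bigr => j _.
    by rewrite coef_Poly (nth_map 0) // exprS mulrCA.
  have h0 : \prod_(i < d) F i = 0.
    apply: poly_zero => b; rewrite horner_prod -(hb b) evalp.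
    by apply: eq_bigr => i _; exact: hF.
  move/eqP: h0 => /prodf_eq0 [i _ /eqP hFi]; exists i.
  have c0 := congr1 (fun p : {poly K} => p`_0) hFi.
  rewrite /= coefD coefC coefXM coef0 /= addr0 in c0.
  split.
  + move=> t tT; have := congr1 (fun p : {poly K} => p`_(index t (T i)).+1) hFi.
    rewrite /= coefD coefC coefXM coef_Poly coef0 /= add0r.
    by rewrite (nth_map 0) ?index_mem // nth_index.
  + move=> u uU; apply/eqP => hu0; move: c0.
    rewrite (big_rem u) //= hu0 mul0r mulr0 subr0 => /eqP; by rewrite oner_eq0.
Qed.

Lemma qat (i0 : 'I_d) b x :
  (qCNF T U).@[env (i0.+1)%:R b x] =
  (\prod_(h < d | h != i0) ((i0.+1)%:R - (h.+1)%:R))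
  * \prod_(t <- T i0) t.@[x] * \prod_(u <- U i0) (1 - b * u.@[x]).
Proof.
rewrite evalq.
have -> : \prod_(i < d) ((i0.+1)%:R - (i.+1)%:R : K) = 0.
  by apply/eqP/prodf_eq0; exists i0 => //; rewrite subrr.
rewrite mulr0 subr0 mul1r (bigD1 i0) //= [X in _ + X]big1 ?addr0 // => i ne.
by rewrite (bigD1 i0) /=; [rewrite subrr !mul0r | rewrite eq_sym].
Qed.

Lemma cnf x : holdsCNF T U x <-> forall a, exists b, (qCNF T U).@[env a b x] = 0.
Proof.
split.
- move=> hx a.
  have [P0|Pn0] := eqVneq (\prod_(i < d) (a - (i.+1)%:R)) 0; last first.
    by exists (\prod_(i < d) (a - (i.+1)%:R))^-1; rewrite evalq mulVf // subrr mul0r.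
  move/eqP: P0 => /prodf_eq0 [i0 _]; rewrite subr_eq0 => /eqP ->.
  case: (hx i0) => [[t tT t0]|[u uU u0]].
    by exists 0; rewrite qat (big_rem _ tT) //= t0 !(mul0r, mulr0).
  by exists (u.@[x])^-1; rewrite qat (big_rem _ uU) //= mulVf // subrr mul0r mulr0.
- move=> hq i0; have [b hb] := hq (i0.+1)%:R; rewrite qat in hb.
  case: (boolP (has (fun t => t.@[x] == 0) (T i0))) => [/hasP [t tT /eqP t0]|hT].
    by left; exists t.
  case: (boolP (has (fun u => u.@[x] != 0) (U i0))) => [/hasP [u uU u0]|hU].
    by right; exists u.
  exfalso; move: hb; apply/eqP; rewrite !mulf_neq0 //.
  + apply/prodf_neq0 => h hne; rewrite subr_eq0; apply/negP => /eqP /natr_inj [] e.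
    by move: hne; rewrite eq_sym; apply/negP; rewrite negbK; apply/eqP/val_inj.
  + rewrite prodf_seq_neq0; apply/allP => t tT; rewrite implyTb.
    exact: (hasPn hT).
  + rewrite big1_seq ?oner_neq0 // => u uU.
    by have := hasPn hU u uU; rewrite negbK => /eqP ->; rewrite mulr0 subr0.
Qed.
End Logic.

Unset Implicit Arguments.

Theorem mainTheorem4 (K : fieldType)
  (Hchar : [pchar K] =i pred0)
  (Hinf : forall s : seq K, exists x : K, x \notin s)
  (n d : nat) (T U : 'I_d -> seq {mpoly K[n]}) :
  (* Theorem 4.1 over K *)
  ((forall x : 'I_n -> K,
      holdsDNF T U x <->
      exists a : K, forall b : K, (pDNF T U).@[env a b x] = 0)
   /\ (mdegv (pDNF T U) (varA n) <= d)%N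
   /\ (mdegv (pDNF T U) (varB n) <= num_eqs T)%N)
  /\
  (* Theorem 5.1 over K *)
  ((forall x : 'I_n -> K,
      holdsCNF T U x <->
      forall a : K, exists b : K, (qCNF T U).@[env a b x] = 0)
   /\ (mdegv (qCNF T U) (varA n) <= (2 * d).-1)%N
   /\ (mdegv (qCNF T U) (varB n) <= (max_ineqs U).+1)%N).
Proof.
split; split.
- by move=> x; apply: dnf.
- by split; [apply: degpA | apply: degpB].
- by move=> x; apply: cnf.
- by split; [apply: degqA | apply: degqB].
Qed.
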